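(* Let $\mathcal{H}$ be a real Hilbert space, let $\Gamma\subseteq\mathbb{R}_{++}$ be nonempty, let $\alpha\in(0,1)$ and let $(T_\gamma)_{\gamma\in\Gamma}$ be a family of $\alpha$-averaged nonexpansive operators $\mathcal{H}\to\mathcal{H}$ with $\operatorname{Fix}T_\gamma\neq\emptyset$ for all $\gamma\in\Gamma$. Let $(\mathcal{Q}_{\delta\leftarrow\gamma})_{\gamma,\delta\in\Gamma}$ be fixed-point relocators for $(T_\gamma)_{\gamma\in\Gamma}$ with Lipschitz constants $(\mathcal{L}_{\delta\leftarrow\gamma})_{\gamma,\delta\in\Gamma}$ in $[1,+\infty)$. Suppose that: (1) for each bounded subset $S\subseteq\bigcup_{\gamma\in\Gamma}(\operatorname{Fix}T_\gamma\times\{\gamma\})$ there exists $L>0$ with $\|\mathcal{Q}_{\delta\leftarrow\gamma}x-\mathcal{Q}_{\gamma\leftarrow\gamma}x\|\le L|\delta-\gamma|$ for all $\delta\in\Gamma$ and all $(x,\gamma)\in S$; (2) the map $\mathcal{H}\times\Gamma\to\mathcal{H}$, $(x,\gamma)\mapsto T_\gamma x$, is continuous; (3) $(T_\gamma)_{\gamma\in\Gamma}$ is uniformly boundedly linearly regular; (4) $(\gamma_n)_{n\in\mathbb{N}}\subseteq\Gamma$ converges $R$-linearly to some $\gamma^*\in\Gamma$, and $\sum_{n\in\mathbb{N}}(\mathcal{L}_{\gamma_{n+1}\leftarrow\gamma_n}-1)<+\infty$. Given $x_0\in\mathcal{H}$, define $x_{n+1}:=\mathcal{Q}_{\gamma_{n+1}\leftarrow\gamma_n}T_{\gamma_n}x_n$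 for all $n\in\mathbb{N}$. Then: (i) $(\operatorname{dist}(x_n,\operatorname{Fix}T_{\gamma_n}))_{n\in\mathbb{N}}$ converges $R$-linearly to zero; (ii) $(x_n)_{n\in\mathbb{N}}$ and $(T_{\gamma_n}x_n)_{n\in\mathbb{N}}$ converge $R$-linearly to the same point in $\operatorname{Fix}T_{\gamma^*}$.
   Context: An operator $T:\mathcal{H}\to\mathcal{H}$ is $\alpha$-averaged nonexpansive ($\alpha\in(0,1)$) if $\|Tx-Ty\|^2+\frac{1-\alpha}{\alpha}\|(x-Tx)-(y-Ty)\|^2\le\|x-y\|^2$ for all $x,y$. $\operatorname{Fix}T=\{x: Tx=x\}$, and $\operatorname{dist}(x,C)=\inf_{y\in C}\|x-y\|$. Fixed-point relocators: given a nonempty $\Gamma\subseteq\mathbb{R}_{++}$ and operators $(T_\gamma)_{\gamma\in\Gamma}$ on $\mathcal{H}$, a family of operators $(\mathcal{Q}_{\delta\leftarrow\gamma})_{\delta,\gamma\in\Gamma}$ on $\mathcal{H}$ is called fixed-point relocators for $(T_\gamma)$ with Lipschitz constants $(\mathcal{L}_{\delta\leftarrow\gamma})$ in $[1,\infty)$ if: (a) for all $\gamma,\delta\in\Gamma$, the restriction of $\mathcal{Q}_{\delta\leftarrow\gamma}$ to $\operatorname{Fix}T_\gamma$ is a bijection from $\operatorname{Fix}T_\gamma$ onto $\operatorname{Fix}T_\delta$; (b) for all $\gamma\in\Gamma$ and $x\in\operatorname{Fix}T_\gamma$, the map $\Gamma\to\mathcal{H}$, $\delta\mapsto\mathcal{Q}_{\delta\leftarrow\gamma}x$,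 is continuous; (c) for all $\gamma,\delta,\epsilon\in\Gamma$ and $x\in\operatorname{Fix}T_\gamma$, $\mathcal{Q}_{\epsilon\leftarrow\delta}\mathcal{Q}_{\delta\leftarrow\gamma}x=\mathcal{Q}_{\epsilon\leftarrow\gamma}x$; (d) each $\mathcal{Q}_{\delta\leftarrow\gamma}$ is $\mathcal{L}_{\delta\leftarrow\gamma}$-Lipschitz continuous. Uniform bounded linear regularity: $(T_\gamma)_{\gamma\in\Gamma}$ is uniformly boundedly linearly regular if for every nonempty bounded $S\subseteq\mathcal{H}$ there is $\kappa>0$ with $\operatorname{dist}(x,\operatorname{Fix}T_\gamma)\le\kappa\|x-T_\gamma x\|$ for all $x\in S$ and all $\gamma\in\Gamma$. A sequence $(a_n)$ converges $R$-linearly to $a$ if there exist $C\ge 0$ and $r\in(0,1)$ with $\|a_n-a\|\le Cr^n$ for all $n$. *)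

(* Defs.v *)
From HB Require Import structures.
From mathcomp Require Import all_boot all_order all_algebra.
From mathcomp Require Import all_classical all_reals all_analysis.
Set Implicit Arguments. Unset Strict Implicit. Unset Printing Implicit Defensive.
Import Order.TTheory GRing.Theory Num.Theory.
Import numFieldNormedType.Exports.
Local Open Scope classical_set_scope.
Local Open Scope ring_scope.

(* A real Hilbert space is represented as a complete normed space H over
   R : realType together with an inner product ip inducing its norm. *)
Definition is_inner_product (R : realType) (H : normedModType R)
  (ip : H -> H -> R) : Prop :=
  [/\ (forall x y, ip x y = ip y x),
      (forall a x y z, ip (a *: x + y) z = a * ip x z + ip y z) &
      (forall x, ip x x = `|x| ^+ 2)].

Definition Fix (T : Type) (f : T -> T) : set T := [set x | f x = x].

Definition dist (R : realType) (H : normedModType R) (x : H) (C : set H) : R :=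
  inf [set `|x - y| | y in C].

Definition averaged (R : realType) (H : normedModType R) (alpha : R)
  (T : H -> H) : Prop :=
  forall x y, `|T x - T y| ^+ 2 + (1 - alpha) / alpha * `|(x - T x) - (y - T y)| ^+ 2
              <= `|x - y| ^+ 2.

(* Fixed-point relocators (Q d g = Q_{d <- g}) with Lipschitz constants L d g
   in [1, +oo), for the family (T g)_{g in Gamma}. *)
Definition fixed_point_relocators (R : realType) (H : normedModType R)
  (Gamma : set R) (T : R -> H -> H) (Q : R -> R -> H -> H) (L : R -> R -> R)
  : Prop :=
  [/\
      (forall g d, Gamma g -> Gamma d -> 1 <= L d g),
      (forall g d, Gamma g -> Gamma d ->
         [/\ (forall x, Fix (T g) x -> Fix (T d) (Q d g x)),
             (forall x y, Fix (T g) x -> Fix (T g) y -> Q d g x = Q d g y -> x = y) &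
             (forall z, Fix (T d) z -> exists2 x, Fix (T g) x & Q d g x = z)]),
      (forall g x, Gamma g -> Fix (T g) x ->
         {within Gamma, continuous (fun d => Q d g x)}),
      (forall g d e x, Gamma g -> Gamma d -> Gamma e -> Fix (T g) x ->
         Q e d (Q d g x) = Q e g x) &
      (forall g d, Gamma g -> Gamma d ->
         forall x y, `|Q d g x - Q d g y| <= L d g * `|x - y|)].

Definition bounded_setH (R : realType) (H : normedModType R) (S : set H) : Prop :=
  exists M : R, forall x, S x -> `|x| <= M.

Definition bounded_setHR (R : realType) (H : normedModType R) (S : set (H * R))
  : Prop :=
  exists M : R, forall p, S p -> `|p.1| <= M /\ `|p.2| <= M.

Definition uniformly_boundedly_linearly_regular (R : realType)
  (H : normedModType R) (Gamma : set R) (T : R -> H -> H) : Prop :=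
  forall S : set H, S !=set0 -> bounded_setH S ->
    exists2 kappa : R, 0 < kappa &
      forall x g, S x -> Gamma g -> dist x (Fix (T g)) <= kappa * `|x - T g x|.

Definition R_linear_cvg (R : realType) (V : normedModType R) (a : nat -> V)
  (l : V) : Prop :=
  exists C : R, exists r : R,
    [/\ 0 <= C, 0 < r, r < 1 & forall n, `|a n - l| <= C * r ^+ n].

(* Main.v *)
Require Import Defs.
From HB Require Import structures.
From mathcomp Require Import all_boot all_order all_algebra.
From mathcomp Require Import all_classical all_reals all_analysis.
From mathcomp Require Import ring lra.
Import Order.TTheory GRing.Theory Num.Theory.
Import numFieldNormedType.Exports.
Local Open Scope classical_set_scope.
Local Open Scope ring_scope.

Lemma tel3 (V : zmodType) (a b c e : V) : (a - b) + (b - c) + (c - e) = a - e.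
Proof. by rewrite !addrA !subrK. Qed.

Section Aux.
Variables (R : realType) (H : normedModType R).

Lemma dist_lbound (x : H) (C : set H) : has_lbound [set `|x - y| | y in C].
Proof. by exists 0 => _ [y _ <-]. Qed.

Lemma dist_le (x : H) (C : set H) y : C y -> dist x C <= `|x - y|.
Proof. by move=> Cy; apply: ge_inf; [exact: dist_lbound| exists y]. Qed.

Lemma le_dist (x : H) (C : set H) a : C !=set0 ->
  (forall y, C y -> a <= `|x - y|) -> a <= dist x C.
Proof.
move=> [y Cy] h; apply: lb_le_inf; first by exists `|x - y|, y.
by move=> _ [z Cz <-]; exact: h.
Qed.

Lemma dist_ge0 (x : H) (C : set H) : C !=set0 -> 0 <= dist x C.
Proof. by move=> C0; apply: le_dist => // y _. Qed.

Lemma dist_approx (x : H) (C : set H) e : C !=set0 -> 0 < e ->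
  exists2 y, C y & `|x - y| < dist x C + e.
Proof.
move=> [y Cy] e0.
have [_ [z Cz <-] h] := @inf_adherent _ [set `|x - y| | y in C] e e0
  (conj (ex_intro _ `|x - y| (ex_intro2 _ _ y Cy erefl)) (dist_lbound x C)).
by exists z.
Qed.

Lemma nonexp (alpha : R) (T : H -> H) : 0 < alpha -> alpha < 1 ->
  averaged alpha T -> forall u v, `|T u - T v| <= `|u - v|.
Proof.
move=> a0 a1 hT u v; have := hT u v.
have c0 : 0 <= (1 - alpha) / alpha by rewrite divr_ge0// ?subr_ge0 ltW.
move=> h; rewrite -(@ler_pXn2r _ 2)// ?nnegrE//.
apply: le_trans h; rewrite lerDl mulr_ge0// exprn_ge0//.
Qed.

End Aux.
Section Geom.
Variables (R : realType) (H : completeNormedModType R).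

Lemma geom_cvg (u : nat -> H) K s : 0 <= K -> 0 < s -> s < 1 ->
  (forall n, `|u n.+1 - u n| <= K * s ^+ n) ->
  exists l, forall n, `|u n - l| <= K / (1 - s) * s ^+ n.
Proof.
move=> K0 s0 s1 hu.
have s1' : 0 < 1 - s by rewrite subr_gt0.
set K' := K / (1 - s).
have K'0 : 0 <= K' by rewrite divr_ge0// ltW.
have h1 : forall n k, `|u (n + k)%N - u n| <= K' * (s ^+ n - s ^+ (n + k)).
  move=> n; elim=> [|k IH]; first by rewrite addn0 !subrr normr0 mulr0.
  rewrite addnS (_ : u (n + k).+1 - u n = (u (n + k).+1 - u (n + k)) + (u (n+k)%N - u n)); last first.
    by rewrite addrA subrK.
  apply: (le_trans (ler_normD _ _)).
  apply: le_trans (lerD (hu _) IH) _.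
  rewrite le_eqVlt; apply/orP; left; apply/eqP.
  rewrite /K' exprS; field; by rewrite lt0r_neq0.
have h2 : forall n m, (n <= m)%N -> `|u m - u n| <= K' * s ^+ n.
  move=> n m /subnKC <-; apply: (le_trans (h1 n (m - n)%N)).
  by rewrite ler_wpM2l// lerBlDr lerDl exprn_ge0// ltW.
have cu : cvg (u @ \oo).
  apply: cauchy_cvg; apply: cauchy_exP => e e0.
  have e0' : 0 < e / (K' + 1) by rewrite divr_gt0// ltr_wpDl.
  have := cvg_expr (z := s); rewrite gtr0_norm// => /(_ s1).
  move=> /cvgr_dist_lt/(_ _ e0') [N _ hN].
  exists (u N); rewrite /fmapE -ball_normE /ball_ /=.
  exists N => // n /= Nn.
  rewrite distrC; apply: (le_lt_trans (h2 _ _ Nn)).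
  have := hN N (leqnn N); rewrite sub0r normrN ger0_norm ?exprn_ge0 ?ltW//.
  rewrite ltr_pdivlMr ?ltr_wpDl// mulrC => h.
  apply: le_lt_trans h; rewrite ler_wpM2r ?exprn_ge0 ?ltW// ?lerDl; lra.
exists (lim (u @ \oo)) => n.
set l := lim _.
apply/ler_addgt0Pr => e e0.
have : \forall m \near \oo, (n <= m)%N /\ `|l - u m| < e.
  near=> m; split; [near: m; exact: nbhs_infty_ge|near: m].
  exact: cvgr_dist_lt.
move=> /filter_ex [m [nm hm]].
rewrite (_ : u n - l = (u n - u m) + (u m - l)); last by rewrite addrA subrK.
apply: (le_trans (ler_normD _ _)); apply: lerD; first by rewrite distrC h2.
by rewrite distrC ltW.
Unshelve. all: by end_near.
Qed.

End Geom.
Lemma prod_bound (R : realType) (a : nat -> R) : (forall k, 1 <= a k) ->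
  (\sum_(0 <= n <oo) ((a n - 1)%:E) < +oo)%E ->
  exists B, forall n, 1 <= \prod_(0 <= k < n) a k <= B.
Proof.
move=> a1 hs.
set E := (\sum_(0 <= n <oo) ((a n - 1)%:E))%E.
have E0 : (0 <= E)%E by apply: nneseries_ge0 => n _; rewrite lee_fin subr_ge0.
have Ef : E \is a fin_num by rewrite ge0_fin_numE.
exists (expR (fine E)) => n; apply/andP; split.
  elim: n => [|n IH]; first by rewrite big_geq.
  by rewrite big_nat_recr//= mulr_ege1.
have : (\sum_(0 <= k < n) ((a k - 1)%:E) <= E)%E.
  by apply: nneseries_lim_ge => k _ _; rewrite lee_fin subr_ge0.
rewrite sumEFin -(fineK Ef) lee_fin => hn.
apply: (le_trans _ (_ : expR (\sum_(0 <= k < n) (a k - 1)) <= _)); last by rewrite ler_expR.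
rewrite expR_sum; apply: ler_prod => k _; apply/andP; split.
  by apply: le_trans (a1 k); exact: ler01.
by apply: le_trans (expR_ge1Dx _); rewrite addrC subrK.
Qed.

Lemma Rlin_cvg (R : realType) (V : normedModType R) (a : nat -> V) l :
  R_linear_cvg a l -> a @ \oo --> l.
Proof.
move=> [C [r [C0 r0 r1 h]]].
apply/cvgrPdist_lt => e e0.
have e0' : 0 < e / (C + 1) by rewrite divr_gt0// ltr_wpDl.
have := cvg_expr (z := r); rewrite gtr0_norm// => /(_ r1).
move=> /cvgr_dist_lt/(_ _ e0'); apply: filterS => n.
rewrite sub0r normrN ger0_norm ?exprn_ge0 ?ltW// ltr_pdivlMr ?ltr_wpDl// => hn.
rewrite distrC; apply: le_lt_trans (h n) _; apply: le_lt_trans hn.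
rewrite [X in _ <= X]mulrC ler_wpM2r ?exprn_ge0 ?ltW//; lra.
Qed.
Theorem theorem3p6 (R : realType) (H : completeNormedModType R)
  (ip : H -> H -> R) (Gamma : set R) (alpha : R)
  (T : R -> H -> H) (Q : R -> R -> H -> H) (L : R -> R -> R)
  (gamma : nat -> R) (gstar : R) (x : nat -> H) :
  is_inner_product ip ->
  Gamma !=set0 ->
  (forall g, Gamma g -> 0 < g) ->
  0 < alpha -> alpha < 1 ->
  (forall g, Gamma g -> averaged alpha (T g)) ->
  (forall g, Gamma g -> Fix (T g) !=set0) ->
  fixed_point_relocators Gamma T Q L ->
  (* (1) *)
  (forall S : set (H * R),
     S `<=` [set p | Gamma p.2 /\ Fix (T p.2) p.1] -> bounded_setHR S ->
     exists2 Lc : R, 0 < Lc &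
       forall d p, Gamma d -> S p ->
         `|Q d p.2 p.1 - Q p.2 p.2 p.1| <= Lc * `|d - p.2|) ->
  (* (2) *)
  {within [set p : H * R | Gamma p.2], continuous (fun p => T p.2 p.1)} ->
  (* (3) *)
  uniformly_boundedly_linearly_regular Gamma T ->
  (* (4) *)
  (forall n, Gamma (gamma n)) -> Gamma gstar ->
  R_linear_cvg gamma gstar ->
  (\sum_(0 <= n <oo) ((L (gamma n.+1) (gamma n) - 1)%:E) < +oo)%E ->
  (* iteration *)
  (forall n, x n.+1 = Q (gamma n.+1) (gamma n) (T (gamma n) (x n))) ->
  R_linear_cvg (fun n => dist (x n) (Fix (T (gamma n)))) 0
  /\ exists2 xs : H, Fix (T gstar) xs &
       R_linear_cvg x xs /\ R_linear_cvg (fun n => T (gamma n) (x n)) xs.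
Proof.
move=> _ _ _ a0 a1 Tav Fne [HL1 Hbij _ Hcomp HLip] H1 Hcont Hreg Gg Ggs
  hgam Hsum Hx.
have hgam' := hgam; case: hgam' => [Cg [rg [Cg0 rg0 rg1 hg]]].
have Qid : forall g y, Gamma g -> Fix (T g) y -> Q g g y = y.
  move=> g y Gg' Fy; have [inF inj _] := Hbij g g Gg' Gg'.
  by apply: inj => //; [exact: inF | rewrite Hcomp].
have Tne : forall n u v, `|T (gamma n) u - T (gamma n) v| <= `|u - v|.
  by move=> n; apply: nonexp a0 a1 (Tav _ (Gg n)).
set Ln := fun n => L (gamma n.+1) (gamma n).
have Ln1 : forall n, 1 <= Ln n by move=> n; exact: HL1.
have [B hB] := @prod_bound _ Ln Ln1 Hsum.
set P := fun n => \prod_(0 <= k < n) Ln k.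
have PS : forall n, P n.+1 = P n * Ln n by move=> n; rewrite /P big_nat_recr.
have LnB : forall n, Ln n <= B.
  move=> n; have /andP[_ h] := hB n.+1; apply: le_trans h.
  have /andP[h1 _] := hB n; rewrite big_nat_recr//= ler_peMl//.
  exact: le_trans (Ln1 n).
have B1 : 1 <= B by have /andP[h1 h2] := hB 0%N; exact: le_trans h2.
have gb : forall n m, `|gamma n - gamma m| <= Cg * rg ^+ n + Cg * rg ^+ m.
  move=> n m; rewrite (_ : gamma n - gamma m = (gamma n - gstar) - (gamma m - gstar)); last by rewrite opprB addrA subrK.
  by apply: (le_trans (ler_normB _ _)); apply: lerD.
have rgn1 : forall n, rg ^+ n <= 1 by move=> n; rewrite exprn_ile1// ltW.
have [p0 Fp0] := Fne _ (Gg 0%N).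
set p := fun n => Q (gamma n) (gamma 0%N) p0.
have pF : forall n, Fix (T (gamma n)) (p n).
  by move=> n; have [inF _ _] := Hbij _ _ (Gg 0%N) (Gg n); exact: inF.
have pS : forall n, p n.+1 = Q (gamma n.+1) (gamma n) (p n).
  by move=> n; rewrite /p Hcomp.
have hxp : forall n, `|x n - p n| <= P n * `|x 0%N - p 0%N|.
  elim=> [|n IH]; first by rewrite /P big_geq// mul1r.
  rewrite Hx pS PS; apply: le_trans (HLip _ _ (Gg _) (Gg _) _ _) _.
  have hh : `|T (gamma n) (x n) - p n| <= P n * `|x 0%N - p 0%N|.
    by rewrite -{1}(pF n); apply: le_trans (Tne _ _ _) IH.
  have := Ln1 n; rewrite /Ln => l1; nra.
have [Lc0 Lc00 hLc0] : exists2 Lc, 0 < Lc & forall d, Gamma d ->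
    `|Q d (gamma 0%N) p0 - Q (gamma 0%N) (gamma 0%N) p0| <= Lc * `|d - gamma 0%N|.
  have sub : [set (p0, gamma 0%N)] `<=` [set q | Gamma q.2 /\ Fix (T q.2) q.1].
    by move=> q ->; split => //; exact: Gg.
  have bnd : bounded_setHR [set (p0, gamma 0%N)].
    by exists (Num.max `|p0| `|gamma 0%N|) => q -> /=; rewrite !le_max !lexx ?orbT.
  have [Lc h1 h2] := H1 _ sub bnd.
  by exists Lc => // d Gd; exact: (h2 d (p0, gamma 0%N) Gd erefl).
have hp : forall n, `|p n - p0| <= Lc0 * (2 * Cg).
  move=> n; have := hLc0 (gamma n) (Gg n).
  rewrite /= Qid// => h; apply: (le_trans h).
  rewrite ler_pM2l //; have := gb n 0%N; have := rgn1 n; have := rgn1 0%N; nra.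
set Mx := B * `|x 0%N - p 0%N| + Lc0 * (2 * Cg) + `|p0|.
have xB : forall n, `|x n| <= Mx.
  move=> n; rewrite (_ : x n = (x n - p n) + (p n - p0) + p0); last by rewrite -addrA !subrK.
  apply: (le_trans (ler_normD _ _)); rewrite lerD2r.
  apply: (le_trans (ler_normD _ _)); apply: lerD => //.
  apply: (le_trans (hxp n)); rewrite ler_wpM2r//; by case/andP: (hB n).
set F := fun n => Fix (T (gamma n)).
set z := fun n => T (gamma n) (x n).
set d := fun n => dist (x n) (F n).
have Fn0 : forall n, F n !=set0 by move=> n; exact: Fne.
have d0 : forall n, 0 <= d n by move=> n; exact: dist_ge0.
have bx : bounded_setH (range x) by exists Mx => _ [n _ <-].
have rx : range x !=set0 by exists (x 0%N), 0%N.
have [kap kap0 hkap] := Hreg (range x) rx bx.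
have dreg : forall n, d n <= kap * `|x n - z n|.
  by move=> n; apply: hkap; [exists n|exact: Gg].
set c := (1 - alpha) / alpha.
have c0 : 0 < c by rewrite divr_gt0// subr_gt0.
set th := c / (c + kap ^+ 2).
have th0 : 0 < th by rewrite divr_gt0// addr_gt0// exprn_gt0.
have th1 : th < 1 by rewrite ltr_pdivrMr ?addr_gt0 ?exprn_gt0// mul1r ltrDl exprn_gt0.
have thk : th * kap ^+ 2 <= c.
  rewrite /th mulrAC ler_pdivrMr ?addr_gt0 ?exprn_gt0//.
  rewrite ler_wpM2l ?ltW//; lra.
set rho := 1 - th / 2.
have rho0 : 0 < rho by rewrite /rho; lra.
have rho1 : rho < 1 by rewrite /rho; lra.
have key : forall n y, F n y -> `|z n - y| ^+ 2 <= `|x n - y| ^+ 2 - th * d n ^+ 2.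
  move=> n y Fy; have := Tav _ (Gg n) (x n) y.
  rewrite -/c Fy subrr subr0 -/(z n) => h.
  have h2 : th * d n ^+ 2 <= c * `|x n - z n| ^+ 2.
    apply: (le_trans (_ : _ <= th * (kap * `|x n - z n|) ^+ 2)).
      apply: ler_wpM2l; first exact: ltW.
      apply: lerXn2r; rewrite ?nnegrE//; apply: mulr_ge0 => //; exact: ltW.
    by rewrite exprMn mulrA ler_wpM2r// exprn_ge0.
  lra.
have dz : forall n, dist (z n) (F n) <= rho * d n.
  move=> n; set D := dist (z n) (F n).
  have D0 : 0 <= D by exact: dist_ge0.
  set a := Num.sqrt (D ^+ 2 + th * d n ^+ 2).
  have aa0 : 0 <= a by exact: sqrtr_ge0.
  have a2 : a ^+ 2 = D ^+ 2 + th * d n ^+ 2.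
    rewrite sqr_sqrtr//; apply: addr_ge0; [exact: sqr_ge0| apply: mulr_ge0; [exact: ltW|exact: sqr_ge0]].
  have ad : a <= d n.
    apply: le_dist => // y Fy.
    rewrite -(@ler_pXn2r _ 2)// ?nnegrE// a2.
    have := key n y Fy; have : D <= `|z n - y| by exact: dist_le.
    move=> hD hk; have : D ^+ 2 <= `|z n - y| ^+ 2 by rewrite lerXn2r// ?nnegrE.
    lra.
  have : D ^+ 2 <= (rho * d n) ^+ 2.
    have : a ^+ 2 <= d n ^+ 2 by rewrite lerXn2r// ?nnegrE.
    rewrite a2 exprMn /rho => h; have := d0 n; nra.
  by rewrite ler_pXn2r// ?nnegrE// mulr_ge0// ltW.
have dstep : forall n, d n.+1 <= Ln n * (rho * d n).
  move=> n; have L0 : 0 < Ln n by exact: lt_le_trans ltr01 (Ln1 n).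
  apply: (le_trans _ (ler_wpM2l (ltW L0) (dz n))).
  rewrite mulrC -ler_pdivrMr//; apply: le_dist => // y Fy.
  rewrite ler_pdivrMr//.
  have [inF _ _] := Hbij _ _ (Gg n) (Gg n.+1).
  apply: (le_trans (@dist_le _ _ _ _ _ (inF _ Fy))).
  by rewrite /d Hx mulrC; apply: HLip; exact: Gg.
have dn : forall n, d n <= P n * rho ^+ n * d 0%N.
  elim=> [|n IH]; first by rewrite /P big_geq// expr0 !mul1r.
  apply: (le_trans (dstep n)); rewrite PS exprS.
  have L0 : 0 <= Ln n by exact: le_trans ler01 (Ln1 n).
  have -> : P n * Ln n * (rho * rho ^+ n) * d 0%N = Ln n * (rho * (P n * rho ^+ n * d 0%N)) by ring.
  by apply: ler_wpM2l => //; apply: ler_wpM2l => //; exact: ltW.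
have dB : forall n, d n <= B * d 0%N * rho ^+ n.
  move=> n; apply: (le_trans (dn n)); have /andP[_ hP] := hB n.
  have h0 : 0 <= rho ^+ n * d 0%N by rewrite mulr_ge0// exprn_ge0// ltW.
  rewrite -/(P n) in hP; nra.
have B0 : 0 <= B by exact: le_trans ler01 B1.
have rhon1 : forall n, rho ^+ n <= 1 by move=> n; rewrite exprn_ile1// ltW.
split.
  exists (B * d 0%N), rho; split => // [|n]; first exact: mulr_ge0.
  by rewrite subr0 ger0_norm.
have : forall n, exists y, F n y /\ `|x n - y| < d n + rho ^+ n.
  move=> n; have [y ? ?] := @dist_approx _ _ (x n) (F n) (rho ^+ n) (Fn0 n) (exprn_gt0 n rho0).
  by exists y.
case/choice => q hq.
set K1 := B * d 0%N + 1.
have w : forall n, `|x n - q n| <= K1 * rho ^+ n.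
  move=> n; have [_ h] := hq n; apply: (le_trans (ltW h)).
  by rewrite /K1 mulrDl mul1r lerD2r dB.
have qB : forall n, `|q n| <= K1 + Mx.
  move=> n; rewrite (_ : q n = x n - (x n - q n)); last by rewrite opprB addrC subrK.
  apply: (le_trans (ler_normB _ _)); rewrite addrC; apply: lerD => //.
  apply: (le_trans (w n)); have := rhon1 n; have : 0 <= K1 by rewrite /K1 addr_ge0// mulr_ge0.
  have := exprn_ge0 n (ltW rho0); nra.
have gamB : forall n, `|gamma n| <= `|gstar| + Cg.
  move=> n; rewrite (_ : gamma n = (gamma n - gstar) + gstar); last by rewrite subrK.
  apply: (le_trans (ler_normD _ _)); rewrite addrC lerD2l.
  apply: (le_trans (hg n)); have := rhon1 n; have := rgn1 n; nra.
have [Lc2 Lc20 hLc2] : exists2 Lc, 0 < Lc & forall n,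
    `|Q (gamma n.+1) (gamma n) (q n) - Q (gamma n) (gamma n) (q n)| <= Lc * `|gamma n.+1 - gamma n|.
  set S := [set (q n, gamma n) | n in [set: nat]].
  have sub : S `<=` [set u | Gamma u.2 /\ Fix (T u.2) u.1].
    by move=> _ [n _ <-]; split; [exact: Gg | exact: (hq n).1].
  have bnd : bounded_setHR S.
    exists (Num.max (K1 + Mx) (`|gstar| + Cg)) => _ [n _ <-] /=.
    by rewrite !le_max qB gamB !orbT.
  have [Lc h1 h2] := H1 _ sub bnd.
  by exists Lc => // n; exact: (h2 (gamma n.+1) (q n, gamma n) (Gg _) (ex_intro2 _ _ n I erefl)).
set s := Num.max rho rg.
have s0 : 0 < s by rewrite lt_max rho0.
have s1 : s < 1 by rewrite gt_max rho1.
have rs : forall n, rho ^+ n <= s ^+ n.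
  by move=> n; apply: lerXn2r; rewrite ?nnegrE ?le_max ?lexx// ltW.
have gs : forall n, rg ^+ n <= s ^+ n.
  by move=> n; apply: lerXn2r; rewrite ?nnegrE ?le_max ?lexx ?orbT// ltW.
have K10 : 0 <= K1 by rewrite /K1 addr_ge0// mulr_ge0.
have w' : forall n, `|x n - q n| <= K1 * s ^+ n.
  by move=> n; apply: (le_trans (w n)); rewrite ler_wpM2l.
set K2 := B * K1 + Lc2 * (2 * Cg) + K1.
have K20 : 0 <= K2 by rewrite /K2 !addr_ge0// !mulr_ge0// ltW.
have zq : forall n, `|z n - q n| <= `|x n - q n|.
  by move=> n; rewrite -{1}((hq n).1); apply: Tne.
have step : forall n, `|x n.+1 - x n| <= K2 * s ^+ n.
  move=> n.
  have e1 : `|Q (gamma n.+1) (gamma n) (z n) - Q (gamma n.+1) (gamma n) (q n)| <= B * (K1 * s ^+ n).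
    apply: (le_trans (HLip _ _ (Gg _) (Gg _) _ _)).
    apply: ler_pM => //; [exact: le_trans ler01 (Ln1 n)|exact: LnB|exact: le_trans (zq n) (w' n)].
  have e2 : Lc2 * `|gamma n.+1 - gamma n| <= Lc2 * (2 * Cg * s ^+ n).
    apply: ler_wpM2l; first exact: ltW.
    apply: (le_trans (gb _ _)).
    have h1 := gs n; have h2 := gs n.+1.
    have h3 : rg ^+ n.+1 <= rg ^+ n.
      rewrite exprS; have := exprn_ge0 n (ltW rg0); nra.
    nra.
  have e3 : `|q n - x n| <= K1 * s ^+ n by rewrite distrC.
  rewrite (_ : x n.+1 - x n = (Q (gamma n.+1) (gamma n) (z n) - Q (gamma n.+1) (gamma n) (q n))
     + (Q (gamma n.+1) (gamma n) (q n) - Q (gamma n) (gamma n) (q n)) + (q n - x n)); last first.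
    by rewrite (Qid (gamma n)) ?tel3 -?Hx //; case: (hq n).
  apply: (le_trans (ler_normD _ _)); apply: (le_trans (lerD (ler_normD _ _) (lexx _))).
  have e2' := le_trans (hLc2 n) e2.
  have -> : K2 * s ^+ n = B * (K1 * s ^+ n) + Lc2 * (2 * Cg * s ^+ n) + K1 * s ^+ n.
    by rewrite /K2; ring.
  by apply: lerD => //; apply: lerD.
have [xs hxs] := @geom_cvg _ _ x K2 s K20 s0 s1 step.
have hz : forall n, `|z n - xs| <= (2 * K1 + K2 / (1 - s)) * s ^+ n.
  move=> n; rewrite (_ : z n - xs = (z n - q n) + (q n - x n) + (x n - xs)); last first.
    by rewrite tel3.
  apply: (le_trans (ler_normD _ _)); apply: (le_trans (lerD (ler_normD _ _) (lexx _))).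
  have -> : (2 * K1 + K2 / (1 - s)) * s ^+ n = (K1 * s ^+ n + K1 * s ^+ n) + K2 / (1 - s) * s ^+ n.
    by rewrite /K1; ring.
  apply: lerD => //; apply: lerD; first exact: le_trans (zq n) (w' n).
  by rewrite distrC.
have s1' : 0 < 1 - s by rewrite subr_gt0.
have RLx : R_linear_cvg x xs.
  exists (K2 / (1 - s)), s; split => //; exact: divr_ge0 K20 (ltW s1').
have RLz : R_linear_cvg z xs.
  exists (2 * K1 + K2 / (1 - s)), s; split => //.
  by apply: addr_ge0; [exact: mulr_ge0 | exact: divr_ge0 K20 (ltW s1')].
exists xs => //.
have cx := Rlin_cvg _ _ _ _ RLx.
have cz := Rlin_cvg _ _ _ _ RLz.
have cg := Rlin_cvg _ _ _ _ hgam.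
set A := [set u : H * R | Gamma u.2].
have := (proj1 (subspace_continuousP A (fun u : H * R => T u.2 u.1))) Hcont (xs, gstar) Ggs.
move=> hc.
have cu : (fun n => (x n, gamma n)) @ \oo --> within A (nbhs (xs, gstar)).
  move=> U /= hU.
  have cp : (fun n => (x n, gamma n)) @ \oo --> (xs, gstar) by exact: (cvg_pair cx cg).
  have h := cp _ hU.
  change (\forall n \near \oo, A (x n, gamma n) -> U (x n, gamma n)) in h.
  change (\forall n \near \oo, U (x n, gamma n)).
  by apply: filterS h => n; apply; exact: Gg.
have cz2 := cvg_comp _ _ cu hc.
by apply: (cvg_unique _ cz2 cz).
Qed.
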